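(* Let $A$ be a commutative ring. The assignment $\epsilon(a)\mapsto w_{21}(-1)x_{21}(a)$ ($a\in A$) induces a well-defined group isomorphism $\gamma:C(A)\to\mathrm{St}(2,A)/C(2,A)$. Furthermore, the restriction of $\gamma$ to $U(A)$ induces an isomorphism $U(A)\cong K_2(2,A)/C(2,A)$.
   Context: $C(A)$ is the group with generators $\epsilon(a)$, $a\in A$, and relations: with $h(u):=\epsilon(-u)\epsilon(-u^{-1})\epsilon(-u)$ for $u\in A^\times$, (1) $h(u)h(v)=h(uv)$; (2) $\epsilon(a)\epsilon(0)\epsilon(b)=h(-1)\epsilon(a+b)$; (3) $h(u)\epsilon(a)h(u)=\epsilon(u^2a)$. $U(A)$ is the kernel of the homomorphism $C(A)\to\mathrm{SL}_2(A)$, $\epsilon(a)\mapsto\begin{pmatrix}a&1\\-1&0\end{pmatrix}$. $\mathrm{St}(2,A)$ is the group generated by $x_{12}(t),x_{21}(t)$, $t\in A$, with relations $x_{ij}(s)x_{ij}(t)=x_{ij}(s+t)$ and $w_{ij}(u)x_{ij}(t)w_{ij}(-u)=x_{ji}(-u^{-2}t)$ ($u\in A^\times$), where $w_{ij}(u):=x_{ij}(u)x_{ji}(-u^{-1})x_{ij}(u)$. $\phi:\mathrm{St}(2,A)\to\mathrm{SL}_2(A)$ sends $x_{12}(t)\mapsto\begin{pmatrix}1&t\\0&1\end{pmatrix}$, $x_{21}(t)\mapsto\begin{pmatrix}1&0\\t&1\end{pmatrix}$, and $K_2(2,A)=\ker\phi$. With $h_{12}(u)=w_{12}(u)w_{12}(-1)$,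 the symbols $c(u,v)=h_{12}(u)h_{12}(v)h_{12}(uv)^{-1}$ ($u,v\in A^\times$) are central in $\mathrm{St}(2,A)$, and $C(2,A)$ is the subgroup they generate. *)

(* Defs.v *)
From HB Require Import structures.
From mathcomp Require Import all_boot all_order all_algebra.
Set Implicit Arguments. Unset Strict Implicit. Unset Printing Implicit Defensive.
Import GRing.Theory.
Local Open Scope ring_scope.

(* A word over the alphabet X: a letter (x, false) stands for x, (x, true) for x^-1. *)
Definition word (X : Type) := seq (X * bool).

Definition letter (X : Type) (x : X) : word X := [:: (x, false)].

Definition inv_word (X : Type) (w : word X) : word X :=
  rev (map (fun p => (p.1, ~~ p.2)) w).

(* The congruence on words generated by free cancellation and a set of relations
   [R l r] (meaning l = r).  Words modulo [pres_eqv R] form the group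
   < X | R >. *)
Inductive pres_eqv (X : Type) (R : word X -> word X -> Prop) : word X -> word X -> Prop :=
| pe_refl w : pres_eqv R w w
| pe_sym w w' : pres_eqv R w w' -> pres_eqv R w' w
| pe_trans w1 w2 w3 : pres_eqv R w1 w2 -> pres_eqv R w2 w3 -> pres_eqv R w1 w3
| pe_free p q x b : pres_eqv R (p ++ (x, b) :: (x, ~~ b) :: q) (p ++ q)
| pe_rel p q l r : R l r -> pres_eqv R (p ++ l ++ q) (p ++ r ++ q).

Definition mx_eval (A : comUnitRingType) (X : Type) (f : X -> 'M[A]_2) (w : word X) : 'M[A]_2 :=
  foldr (fun p m => (if p.2 then invmx (f p.1) else f p.1) *m m) 1%:M w.

Definition mx2 (A : comUnitRingType) (a b c d : A) : 'M[A]_2 :=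
  \matrix_(i < 2, j < 2)
    if (i == 0 :> nat) then (if (j == 0 :> nat) then a else b)
    else (if (j == 0 :> nat) then c else d).

Section Groups.
Variable A : comUnitRingType.

Definition epsw (a : A) : word A := letter a.

Definition hC (u : A) : word A := epsw (- u) ++ epsw (- u^-1) ++ epsw (- u).

Definition C_rel (l r : word A) : Prop :=
  (exists u v : A, u \is a GRing.unit /\ v \is a GRing.unit /\
     l = hC u ++ hC v /\ r = hC (u * v))
  \/ (exists a b : A, l = epsw a ++ epsw 0 ++ epsw b /\ r = hC (-1) ++ epsw (a + b))
  \/ (exists (u : A) (a : A), u \is a GRing.unit /\
     l = hC u ++ epsw a ++ hC u /\ r = epsw (u ^+ 2 * a)).

Definition C_eqv : word A -> word A -> Prop := pres_eqv C_rel.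

Definition eps_mx (a : A) : 'M[A]_2 := mx2 a 1 (-1) 0.
Definition C_to_SL2 (w : word A) : 'M[A]_2 := mx_eval eps_mx w.

Definition in_U (w : word A) : Prop := C_to_SL2 w = 1%:M.

(* generator (true, t) = x_12(t), (false, t) = x_21(t) *)
Definition xw (ij : bool) (t : A) : word (bool * A) := letter (ij, t).

Definition ww (ij : bool) (u : A) : word (bool * A) :=
  xw ij u ++ xw (~~ ij) (- u^-1) ++ xw ij u.

Definition St_rel (l r : word (bool * A)) : Prop :=
  (exists (ij : bool) (s t : A), l = xw ij s ++ xw ij t /\ r = xw ij (s + t))
  \/ (exists (ij : bool) (u t : A), u \is a GRing.unit /\
       l = ww ij u ++ xw ij t ++ ww ij (- u) /\ r = xw (~~ ij) (- (u ^- 2) * t)).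

Definition St_eqv : word (bool * A) -> word (bool * A) -> Prop := pres_eqv St_rel.

Definition x_mx (g : bool * A) : 'M[A]_2 :=
  if g.1 then mx2 1 g.2 0 1 else mx2 1 0 g.2 1.
Definition phi_St (w : word (bool * A)) : 'M[A]_2 := mx_eval x_mx w.

Definition in_K2 (w : word (bool * A)) : Prop := phi_St w = 1%:M.

Definition h12 (u : A) : word (bool * A) := ww true u ++ ww true (-1).
Definition cw (u v : A) : word (bool * A) := h12 u ++ h12 v ++ inv_word (h12 (u * v)).

(* words that are products of symbols c(u,v) (u, v units) and their inverses:
   these represent exactly the elements of the subgroup C(2,A) of St(2,A) *)
Definition C2_word (c : word (bool * A)) : Prop :=
  exists s : seq ((A * A) * bool),
    all (fun p => (p.1.1 \is a GRing.unit) && (p.1.2 \is a GRing.unit)) s /\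
    c = flatten (map (fun p => if p.2 then inv_word (cw p.1.1 p.1.2)
                               else cw p.1.1 p.1.2) s).

(* equality in St(2,A)/C(2,A): w C(2,A) = w' C(2,A), i.e. w = w' c with c in C(2,A) *)
Definition StC_eqv (w w' : word (bool * A)) : Prop :=
  exists c, C2_word c /\ St_eqv w (w' ++ c).

Definition gamma_gen (a : A) : word (bool * A) := ww false (-1) ++ xw false a.
Definition gamma (w : word A) : word (bool * A) :=
  flatten (map (fun p => if p.2 then inv_word (gamma_gen p.1) else gamma_gen p.1) w).

End Groups.

(* Main.v *)
Require Import Defs.
From HB Require Import structures.
From mathcomp Require Import all_boot all_order all_algebra ring.
From Stdlib Require Import ProofIrrelevance FunctionalExtensionality PropExtensionality ClassicalEpsilon.
Set Implicit Arguments. Unset Strict Implicit. Unset Printing Implicit Defensive.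
Import GRing.Theory.
Local Open Scope ring_scope.


Record grp := Grp {
  gT :> Type;
  gm : gT -> gT -> gT;
  g1 : gT;
  gi : gT -> gT;
  gmA : forall x y z, gm x (gm y z) = gm (gm x y) z;
  g1m : forall x, gm g1 x = x;
  gm1 : forall x, gm x g1 = x;
  gVm : forall x, gm (gi x) x = g1;
  gmV : forall x, gm x (gi x) = g1 }.
Arguments gm {g}. Arguments g1 {g}. Arguments gi {g}.
Infix "**" := gm (at level 40, left associativity).

Section GrpTh.
Variable G : grp.
Implicit Types x y z : G.
Lemma gKm x y : gi x ** (x ** y) = y. Proof. by rewrite gmA gVm g1m. Qed.
Lemma gKVm x y : x ** (gi x ** y) = y. Proof. by rewrite gmA gmV g1m. Qed.
Lemma gmK x y : y ** x ** gi x = y. Proof. by rewrite -gmA gmV gm1. Qed.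
Lemma gmKV x y : y ** gi x ** x = y. Proof. by rewrite -gmA gVm gm1. Qed.
Lemma ginv_uniq x y : x ** y = g1 -> gi x = y.
Proof. by move=> h; rewrite -[gi x]gm1 -h gKm. Qed.
Lemma giK x : gi (gi x) = x. Proof. by apply: ginv_uniq; rewrite gVm. Qed.
Lemma giM x y : gi (x ** y) = gi y ** gi x.
Proof. by apply: ginv_uniq; rewrite -gmA gKVm gmV. Qed.
Lemma gi1 : gi (g1 : G) = g1. Proof. by apply: ginv_uniq; rewrite g1m. Qed.
Lemma gmIl x y z : x ** y = x ** z -> y = z.
Proof. by move=> h; rewrite -(gKm x y) h gKm. Qed.
Lemma gmIr x y z : y ** x = z ** x -> y = z.
Proof. by move=> h; rewrite -(gmK x y) h gmK. Qed.
Lemma g_idem x : x ** x = x -> x = g1.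
Proof. by move=> h; apply: (@gmIl x); rewrite h gm1. Qed.
Definition central (z : G) := forall x, z ** x = x ** z.
End GrpTh.

Section Words.
Variable X : Type.
Implicit Types w u v : word X.

Lemma inv_word_cat u v : inv_word (u ++ v) = inv_word v ++ inv_word u.
Proof. by rewrite /inv_word map_cat rev_cat. Qed.
Lemma inv_word_cons p u : inv_word (p :: u) = inv_word u ++ [:: (p.1, ~~ p.2)].
Proof. by rewrite -cat1s inv_word_cat. Qed.
Lemma inv_wordK u : inv_word (inv_word u) = u.
Proof.
elim: u => [|[x b] u IH] //=; rewrite inv_word_cons inv_word_cat IH /=.
by rewrite negbK.
Qed.

Variable R : word X -> word X -> Prop.
Local Notation eqv := (pres_eqv R).

Lemma eqv_ctx p q u v : eqv u v -> eqv (p ++ u ++ q) (p ++ v ++ q).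
Proof.
elim=> {u v}.
- by move=> w; apply: pe_refl.
- by move=> w w' _ h; apply: pe_sym.
- by move=> w1 w2 w3 _ h1 _ h2; apply: pe_trans h2.
- move=> p0 q0 x b.
  have := pe_free R (p ++ p0) (q0 ++ q) x b.
  by rewrite -!catA /=.
- move=> p0 q0 l r h.
  have := pe_rel (p ++ p0) (q0 ++ q) h.
  by rewrite -!catA.
Qed.

Lemma eqv_cat u u' v v' : eqv u u' -> eqv v v' -> eqv (u ++ v) (u' ++ v').
Proof.
move=> h1 h2; apply: (@pe_trans _ _ _ (u' ++ v)).
  by have := eqv_ctx [::] v h1; rewrite /=.
by have := eqv_ctx u' [::] h2; rewrite !cats0.
Qed.

Lemma eqv_Vr w : eqv (w ++ inv_word w) [::].
Proof.
elim: w => [|[x b] w IH]; first exact: pe_refl.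
rewrite inv_word_cons /=.
apply: (@pe_trans _ _ _ ((x, b) :: [:: (x, ~~ b)])).
  have := eqv_ctx [:: (x, b)] [:: (x, ~~ b)] IH.
  by rewrite /= catA.
by have := pe_free R [::] [::] x b.
Qed.

Lemma eqv_Vl w : eqv (inv_word w ++ w) [::].
Proof. by have := eqv_Vr (inv_word w); rewrite inv_wordK. Qed.

Lemma eqv_inv u v : eqv u v -> eqv (inv_word u) (inv_word v).
Proof.
move=> h.
apply: (@pe_trans _ _ _ (inv_word u ++ v ++ inv_word v)).
  apply: pe_sym; have := eqv_ctx (inv_word u) [::] (eqv_Vr v).
  by rewrite !cats0.
apply: (@pe_trans _ _ _ (inv_word u ++ u ++ inv_word v)).
  by apply: eqv_ctx; apply: pe_sym.
rewrite catA; have := eqv_ctx [::] (inv_word v) (eqv_Vl u).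
by [].
Qed.

Definition Q := {P : word X -> Prop | exists w, P = eqv w}.
Definition cls (w : word X) : Q := exist _ (eqv w) (ex_intro _ w erefl).
Definition rep (q : Q) : word X :=
  proj1_sig (constructive_indefinite_description _ (proj2_sig q)).
Lemma rep_spec q : proj1_sig q = eqv (rep q).
Proof. exact: (proj2_sig (constructive_indefinite_description _ (proj2_sig q))). Qed.
Lemma Q_eq (q1 q2 : Q) : proj1_sig q1 = proj1_sig q2 -> q1 = q2.
Proof.
case: q1 q2 => [P1 h1] [P2 h2] /= e; subst P2.
by rewrite (proof_irrelevance _ h1 h2).
Qed.
Lemma cls_rep q : cls (rep q) = q.
Proof. by apply: Q_eq; rewrite /= rep_spec. Qed.
Lemma cls_eqP w w' : cls w = cls w' <-> eqv w w'.
Proof.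
split.
  move=> /(f_equal (@proj1_sig _ _)) /= e; rewrite e; exact: pe_refl.
move=> h; apply: Q_eq => /=.
apply: functional_extensionality => z; apply: propositional_extensionality.
split=> h'; first by apply: pe_trans h'; apply: pe_sym.
by apply: pe_trans h'.
Qed.
Lemma rep_cls w : eqv (rep (cls w)) w.
Proof. by apply/cls_eqP; rewrite cls_rep. Qed.

Definition qm (a b : Q) := cls (rep a ++ rep b).
Definition q1 := cls [::].
Definition qi (a : Q) := cls (inv_word (rep a)).
Lemma qmE u v : qm (cls u) (cls v) = cls (u ++ v).
Proof. by apply/cls_eqP; apply: eqv_cat; apply: rep_cls. Qed.
Lemma qiE u : qi (cls u) = cls (inv_word u).
Proof. by apply/cls_eqP; apply: eqv_inv; apply: rep_cls. Qed.

Lemma qmA a b c : qm a (qm b c) = qm (qm a b) c.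
Proof.
by rewrite -(cls_rep a) -(cls_rep b) -(cls_rep c) !qmE catA.
Qed.
Lemma q1m a : qm q1 a = a.
Proof. by rewrite -(cls_rep a) qmE. Qed.
Lemma qm1 a : qm a q1 = a.
Proof. by rewrite -(cls_rep a) qmE cats0. Qed.
Lemma qVm a : qm (qi a) a = q1.
Proof. by rewrite -(cls_rep a) qiE qmE; apply/cls_eqP; apply: eqv_Vl. Qed.
Lemma qmV a : qm a (qi a) = q1.
Proof. by rewrite -(cls_rep a) qiE qmE; apply/cls_eqP; apply: eqv_Vr. Qed.

Definition QG : grp := Grp qmA q1m qm1 qVm qmV.

Lemma clsM u v : (cls (u ++ v) : QG) = @gm QG (cls u) (cls v).
Proof. by rewrite /= qmE. Qed.
Lemma clsV u : (cls (inv_word u) : QG) = @gi QG (cls u).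
Proof. by rewrite /= qiE. Qed.
Lemma cls0 : (cls [::] : QG) = @g1 QG. Proof. by []. Qed.

End Words.

Definition mapw (X Y : Type) (g : X -> word Y) (w : word X) : word Y :=
  flatten (map (fun p => if p.2 then inv_word (g p.1) else g p.1) w).
Lemma mapw_cat X Y (g : X -> word Y) (u v : word X) : mapw g (u ++ v) = mapw g u ++ mapw g v.
Proof. by rewrite /mapw map_cat flatten_cat. Qed.
Lemma mapw_inv X Y (g : X -> word Y) (u : word X) : mapw g (inv_word u) = inv_word (mapw g u).
Proof.
elim: u => [|[x b] u IH] //=; rewrite inv_word_cons mapw_cat IH.
have -> : (x, b) :: u = [:: (x, b)] ++ u by [].
rewrite mapw_cat inv_word_cat /mapw /= !cats0; case: b => //=.
by rewrite inv_wordK.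
Qed.


Section Eval.
Variables (X : Type) (G : grp) (f : X -> G).
Definition lv (p : X * bool) : G := if p.2 then gi (f p.1) else f p.1.
Definition ev (w : word X) : G := foldr (fun p g => lv p ** g) g1 w.
Lemma ev_cat u v : ev (u ++ v) = ev u ** ev v.
Proof. by elim: u => [|p u IH] /=; rewrite ?g1m // IH gmA. Qed.
Lemma ev_inv u : ev (inv_word u) = gi (ev u).
Proof.
elim: u => [|[x b] u IH] /=; first by rewrite gi1.
rewrite inv_word_cons ev_cat IH /= giM gm1 /lv /=.
by case: b => //=; rewrite giK.
Qed.
Lemma ev_resp (R : word X -> word X -> Prop) :
  (forall l r, R l r -> ev l = ev r) ->
  forall w w', pres_eqv R w w' -> ev w = ev w'.
Proof.
move=> hR w w'; elim=> {w w'} //.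
- by move=> w1 w2 w3 _ -> _ ->.
- move=> p q x b; rewrite !ev_cat /= /lv /=.
  by case: b => /=; rewrite ?gKVm ?gKm.
- by move=> p q l r h; rewrite !ev_cat (hR _ _ h).
Qed.
End Eval.

Lemma ev_ext X (G : grp) (f f' : X -> G) w : (forall x, f x = f' x) -> ev f w = ev f' w.
Proof. by move=> h; elim: w => [|[x b] w IH] //=; rewrite IH /lv /= h. Qed.

Lemma ev_mapw X Y (G : grp) (f : Y -> G) (g : X -> word Y) w :
  ev f (mapw g w) = ev (fun x => ev f (g x)) w.
Proof.
elim: w => [|[x b] w IH] //=.
rewrite -cat1s mapw_cat ev_cat IH /mapw /= cats0 /lv /=.
by case: b => //=; rewrite ev_inv.
Qed.

Lemma cls_ev X (R : word X -> word X -> Prop) w :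
  (cls R w : QG R) = ev (fun x => (cls R (letter x) : QG R)) w.
Proof.
elim: w => [|[x b] w IH] //=.
rewrite -cat1s clsM IH /lv /=; case: b => //=.
by rewrite qiE.
Qed.


Section Scalars.
Variable A : comUnitRingType.
Implicit Types u v s t : A.
Lemma sq_m1 : ((-1 : A) ^+ 2) = 1. Proof. by rewrite sqrrN expr1n. Qed.
Lemma isq_m1 : ((-1 : A) ^+ 2)^-1 = 1. Proof. by rewrite sq_m1 invr1. Qed.
Lemma isq u : u \is a GRing.unit -> (u ^+ 2)^-1 = u^-1 ^+ 2.
Proof. by move=> _; rewrite exprVn. Qed.
Lemma sc_D4 u s : u \is a GRing.unit -> - ((- u) ^- 2) * (- (u ^+ 2) * s) = s.
Proof.
move=> hu; rewrite sqrrN !mulNr mulrN opprK mulrA mulVr ?mul1r //.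
exact: unitrX.
Qed.
Lemma sc_D5 u : u \is a GRing.unit -> - (u ^- 2) * u = - u^-1.
Proof.
move=> hu; rewrite -exprVn mulNr; congr (- _).
by rewrite expr2 -mulrA mulVr ?mulr1.
Qed.
Lemma sc_inv u : u \is a GRing.unit -> - (- u^-1)^-1 = u.
Proof. by move=> hu; rewrite invrN opprK invrK. Qed.
Lemma sc_cx u v t : u \is a GRing.unit -> v \is a GRing.unit ->
  u ^+ 2 * (v ^+ 2 * ((u * v) ^- 2 * t)) = t.
Proof.
move=> hu hv; rewrite -exprVn invrM // -/(v^-1 * u^-1).
have h1 : u * u^-1 = 1 by rewrite mulrV.
have h2 : v * v^-1 = 1 by rewrite mulrV.
transitivity ((u * u^-1) ^+ 2 * (v * v^-1) ^+ 2 * t); first ring.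
by rewrite h1 h2 !expr1n !mul1r.
Qed.
Lemma sc_cy u v t : u \is a GRing.unit -> v \is a GRing.unit ->
  u ^- 2 * (v ^- 2 * ((u * v) ^+ 2 * t)) = t.
Proof.
move=> hu hv; rewrite -!exprVn.
have h1 : u * u^-1 = 1 by rewrite mulrV.
have h2 : v * v^-1 = 1 by rewrite mulrV.
transitivity ((u * u^-1) ^+ 2 * (v * v^-1) ^+ 2 * t); first ring.
by rewrite h1 h2 !expr1n !mul1r.
Qed.
Lemma sc_cx' u t : u \is a GRing.unit -> u ^+ 2 * (u ^- 2 * t) = t.
Proof. by move=> hu; rewrite mulrA mulrV ?mul1r // unitrX. Qed.
End Scalars.

Section StGroup.
Variables (A : comUnitRingType) (G : grp) (xs : bool -> A -> G).
Definition wg_def ij (u : A) := xs ij u ** (xs (~~ ij) (- u^-1) ** xs ij u).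
Fact wg_key : unit. Proof. by []. Qed.
Definition wg := locked_with wg_key wg_def.
Lemma wgE ij u : wg ij u = xs ij u ** (xs (~~ ij) (- u^-1) ** xs ij u).
Proof. by rewrite /wg unlock. Qed.
Hypothesis HR1 : forall ij s t, xs ij s ** xs ij t = xs ij (s + t).
Hypothesis HR2 : forall ij u t, u \is a GRing.unit ->
  wg ij u ** (xs ij t ** wg ij (- u)) = xs (~~ ij) (- (u ^- 2) * t).
Hypothesis Hgen : forall P : G -> Prop, (forall ij t, P (xs ij t)) -> P g1 ->
  (forall a b, P a -> P b -> P (a ** b)) -> (forall a, P a -> P (gi a)) -> forall g, P g.

Lemma cg_central z : (forall ij t, z ** xs ij t = xs ij t ** z) -> central z.
Proof.
move=> h; apply: Hgen => //.
- by rewrite g1m gm1.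
- by move=> a b ha hb; rewrite gmA ha -gmA hb gmA.
- move=> a ha; apply: (@gmIl _ a); rewrite gmA -ha -gmA gmV gm1.
  by rewrite gmA gmV g1m.
Qed.

Lemma x0 ij : xs ij 0 = g1.
Proof. by apply: g_idem; rewrite HR1 addr0. Qed.
Lemma xV ij t : gi (xs ij t) = xs ij (- t).
Proof. by apply: ginv_uniq; rewrite HR1 subrr x0. Qed.
Lemma wV ij u : gi (wg ij u) = wg ij (- u).
Proof. by rewrite !wgE !giM !xV invrN !opprK gmA. Qed.
Lemma D3 ij u t : u \is a GRing.unit ->
  wg ij u ** xs ij t ** gi (wg ij u) = xs (~~ ij) (- (u ^- 2) * t).
Proof. by move=> hu; rewrite wV -gmA HR2. Qed.
Lemma D4 ij u s : u \is a GRing.unit ->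
  wg ij u ** xs (~~ ij) s ** gi (wg ij u) = xs ij (- (u ^+ 2) * s).
Proof.
move=> hu.
have hu' : - u \is a GRing.unit by rewrite unitrN.
have := D3 ij (- (u ^+ 2) * s) hu'; rewrite sc_D4 // -wV giK => <-.
by rewrite !gmA gmV g1m gmK.
Qed.
Lemma D5 ij u : u \is a GRing.unit -> wg ij u = wg (~~ ij) (- u^-1).
Proof.
move=> hu; have := D3 ij u hu; rewrite sc_D5 // => h.
have e : xs (~~ ij) (- u^-1) ** wg ij u = wg ij u ** xs ij u by rewrite -h gmKV.
rewrite !wgE sc_inv // negbK; rewrite wgE in e.
apply: (@gmIr _ (xs ij u)); rewrite -e.
by rewrite !gmA.
Qed.

Definition W := wg false (-1).
Lemma Wt : W = wg true 1.
Proof. by rewrite /W (D5 false (unitrN1 A)) /= invrN1 opprK. Qed.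
Lemma F1 t : W ** xs false t ** gi W = xs true (- t).
Proof. by rewrite /W D3 ?unitrN1 // isq_m1 mulN1r. Qed.
Lemma F2 s : W ** xs true s ** gi W = xs false (- s).
Proof. by rewrite /W (D4 false _ (unitrN1 A)) sq_m1 mulN1r. Qed.
Lemma F1' t : W ** xs false t = xs true (- t) ** W.
Proof. by rewrite -F1 gmKV. Qed.
Lemma F2' s : W ** xs true s = xs false (- s) ** W.
Proof. by rewrite -F2 gmKV. Qed.
Lemma F3 s : xs true s ** W = W ** xs false (- s).
Proof. by rewrite F1' opprK. Qed.
Lemma F4 s : xs false s ** W = W ** xs true (- s).
Proof. by rewrite F2' opprK. Qed.
Lemma W2c : central (W ** W).
Proof.
apply: cg_central => -[] t.
  by rewrite -gmA F2' gmA F1' opprK -gmA.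
by rewrite -gmA F1' gmA F2' opprK -gmA.
Qed.

Fact hh_key : unit. Proof. by []. Qed.
Definition hh := locked_with hh_key (fun u => wg true u ** wg true (-1)).
Lemma hhE u : hh u = wg true u ** wg true (-1). Proof. by rewrite /hh unlock. Qed.
Fact cc_key : unit. Proof. by []. Qed.
Definition cc := locked_with cc_key (fun u v => hh u ** (hh v ** gi (hh (u * v)))).
Lemma ccE u v : cc u v = hh u ** (hh v ** gi (hh (u * v))). Proof. by rewrite /cc unlock. Qed.
Lemma wm1 : wg true (-1) = gi W. Proof. by rewrite Wt wV. Qed.
Lemma hh1 : hh 1 = g1. Proof. by rewrite hhE wm1 -Wt gmV. Qed.
Lemma hhW u : wg true u = hh u ** W.
Proof. by rewrite hhE wm1 gmKV. Qed.

Lemma hconj_x u t : u \is a GRing.unit -> hh u ** xs true t ** gi (hh u) = xs true (u ^+ 2 * t).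
Proof.
move=> hu; rewrite hhE giM !gmA -(gmA _ _ (xs true t)) -(gmA _ _ (gi (wg true (-1)))).
rewrite (D3 true _ (unitrN1 A)) isq_m1 mulN1r /=.
have := D4 true (- t) hu => /= ->.
by rewrite mulrN mulNr opprK.
Qed.
Lemma hconj_y u t : u \is a GRing.unit -> hh u ** xs false t ** gi (hh u) = xs false (u ^- 2 * t).
Proof.
move=> hu; rewrite hhE giM !gmA -(gmA _ _ (xs false t)) -(gmA _ _ (gi (wg true (-1)))).
have := D4 true t (unitrN1 A) => /= ->.
rewrite sq_m1 mulN1r.
have := D3 true (- t) hu => /= ->.
by rewrite mulrN mulNr opprK.
Qed.

Lemma conjVK (z b : G) : gi z ** (z ** b ** gi z) ** z = b.
Proof. by rewrite -!gmA gKm gVm gm1. Qed.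
Lemma conj_fix (z a : G) : z ** a ** gi z = a -> z ** a = a ** z.
Proof. by move=> h; rewrite -{2}h gmKV. Qed.

Lemma cc_central u v : u \is a GRing.unit -> v \is a GRing.unit -> central (cc u v).
Proof.
move=> hu hv; have huv : u * v \is a GRing.unit by rewrite unitrM hu.
apply: cg_central => -[] t; apply: conj_fix; rewrite ccE !giM giK.
- have e : gi (hh (u * v)) ** xs true t ** hh (u * v) = xs true ((u * v) ^- 2 * t).
    have := hconj_x ((u * v) ^- 2 * t) huv; rewrite sc_cx' // => <-.
    exact: conjVK.
  have -> : hh u ** (hh v ** gi (hh (u * v))) ** xs true t ** (hh (u * v) ** gi (hh v) ** gi (hh u))
     = hh u ** (hh v ** (gi (hh (u * v)) ** xs true t ** hh (u * v)) ** gi (hh v)) ** gi (hh u).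
    by rewrite !gmA.
  by rewrite e hconj_x // hconj_x // sc_cx.
- have e : gi (hh (u * v)) ** xs false t ** hh (u * v) = xs false ((u * v) ^+ 2 * t).
    have := hconj_y ((u * v) ^+ 2 * t) huv.
    rewrite mulrA mulVr ?unitrX // mul1r => <-.
    exact: conjVK.
  have -> : hh u ** (hh v ** gi (hh (u * v))) ** xs false t ** (hh (u * v) ** gi (hh v) ** gi (hh u))
     = hh u ** (hh v ** (gi (hh (u * v)) ** xs false t ** hh (u * v)) ** gi (hh v)) ** gi (hh u).
    by rewrite !gmA.
  by rewrite e hconj_y // hconj_y // sc_cy.
Qed.

Lemma swap_r (a b c d : G) : a ** b = c ** d -> forall z, a ** (b ** z) = c ** (d ** z).
Proof. by move=> h z; rewrite !gmA h. Qed.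
Lemma cmv (z a b : G) : central z -> a ** (z ** b) = z ** (a ** b).
Proof. by move=> hz; rewrite !gmA hz. Qed.
Lemma central_inv (z : G) : central z -> central (gi z).
Proof.
move=> hz a; apply: (@gmIl _ z); rewrite gmA gmV g1m.
by rewrite gmA hz -gmA gmV gm1.
Qed.

Fact E_key : unit. Proof. by []. Qed.
Definition E := locked_with E_key (fun a => W ** xs false a).
Lemma EE a : E a = W ** xs false a. Proof. by rewrite /E unlock. Qed.
Fact HH_key : unit. Proof. by []. Qed.
Definition HH := locked_with HH_key (fun u => E (- u) ** (E (- u^-1) ** E (- u))).
Lemma HHdef u : HH u = E (- u) ** (E (- u^-1) ** E (- u)). Proof. by rewrite /HH unlock. Qed.

Lemma HHE u : u \is a GRing.unit -> HH u = W ** W ** wg true u ** W.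
Proof.
move=> hu; rewrite HHdef !EE wgE -!gmA.
by rewrite F3 (swap_r (F2' _)) ?opprK.
Qed.

Lemma G1 a b : E a ** (E 0 ** E b) = HH (-1) ** E (a + b).
Proof.
rewrite HHE ?unitrN1 // wm1 !EE -HR1 x0 -!gmA gKm g1m.
by rewrite (swap_r (F4 _)) (swap_r (F3 _)) opprK.
Qed.

Definition Cm := cc (-1) (-1).
Lemma Cm_central : central Cm.
Proof. by apply: cc_central; rewrite unitrN1. Qed.
Lemma Ci_central : central (gi Cm).
Proof. exact: central_inv Cm_central. Qed.
Lemma CiE : gi Cm = W ** W ** (W ** W).
Proof.
rewrite /Cm ccE mulrNN mulr1 hh1 gi1 gm1 !hhE wm1 !giM !giK.
by rewrite !gmA.
Qed.
Lemma HHh u : u \is a GRing.unit -> HH u = gi Cm ** hh u.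
Proof.
move=> hu; rewrite HHE // hhW // CiE -!gmA.
by rewrite [W ** (W ** hh u)]gmA -W2c -gmA.
Qed.
Lemma hhM u v : hh u ** hh v = cc u v ** hh (u * v).
Proof. by rewrite ccE -!gmA gVm gm1. Qed.

Lemma G3 u v : u \is a GRing.unit -> v \is a GRing.unit ->
  HH u ** HH v = HH (u * v) ** (gi Cm ** cc u v).
Proof.
move=> hu hv; have huv : u * v \is a GRing.unit by rewrite unitrM hu.
rewrite !HHh // -!gmA (cmv _ _ Ci_central) hhM.
rewrite (cmv _ _ Ci_central) (cc_central hu hv) //.
Qed.

Lemma central_mul (z z' : G) : central z -> central z' -> central (z ** z').
Proof. by move=> h h' a; rewrite -gmA h' gmA h -gmA. Qed.

Lemma Wconj_w u : u \is a GRing.unit -> W ** wg true u ** gi W = wg true u^-1.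
Proof.
move=> hu; rewrite wgE -!gmA (swap_r (F2' _)) (swap_r (F1' _)) (swap_r (F2' _)).
rewrite gmV gm1 opprK.
have hu' : - u \is a GRing.unit by rewrite unitrN.
have := D5 false hu'; rewrite /= invrN opprK => <-.
by rewrite wgE /= invrN opprK.
Qed.
Lemma Wconj_h u : u \is a GRing.unit -> W ** hh u ** gi W = hh u^-1.
Proof.
move=> hu; rewrite !hhE wm1 -Wconj_w //.
by rewrite !gmA.
Qed.
Lemma wwu u : u \is a GRing.unit -> wg true u ** wg true u = cc u u^-1 ** (W ** W).
Proof.
move=> hu; rewrite !hhW.
have -> : hh u ** W ** (hh u ** W) = hh u ** (W ** hh u ** gi W) ** (W ** W).
  by rewrite -!gmA gKm.
by rewrite Wconj_h // hhM mulrV // hh1 gm1.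
Qed.
Lemma D4t u s : u \is a GRing.unit ->
  wg true u ** xs false s = xs true (- (u ^+ 2) * s) ** wg true u.
Proof. by move=> hu; rewrite -(D4 true s hu) gmKV. Qed.

Lemma G4 u a : u \is a GRing.unit ->
  HH u ** (E a ** HH u) = E (u ^+ 2 * a) ** (cc u u^-1 ** (gi Cm ** gi Cm)).
Proof.
move=> hu; have hcc : central (cc u u^-1) by apply: cc_central; rewrite ?unitrV.
rewrite !HHh // !EE -!gmA.
do 3!rewrite (cmv _ _ Ci_central).
rewrite (gmA (hh u) W) -hhW hhE wm1.
rewrite (swap_r (D4t _ hu)) (gmA (wg true u)) wwu // -!gmA gmV gm1.
rewrite (cmv _ _ hcc) F3 mulNr opprK.
have hz : central (cc u u^-1 ** (gi Cm ** gi Cm)).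
  by apply: central_mul => //; apply: central_mul; apply: Ci_central.
rewrite [RHS]gmA -hz -!gmA; rewrite [in RHS](cmv _ _ Ci_central) // (cmv _ _ hcc) (cmv _ _ hcc) //.
Qed.

Lemma surj_x t : E (- t) ** gi (E 0) = xs true t.
Proof. by rewrite !EE x0 gm1 F1 opprK. Qed.
Lemma surj_y t : gi (E 0) ** E t = xs false t.
Proof. by rewrite !EE x0 gm1 gKm. Qed.

End StGroup.


Section CGroup.
Variables (A : comUnitRingType) (G : grp) (e : A -> G).
Fact HC_key : unit. Proof. by []. Qed.
Definition HC := locked_with HC_key (fun u : A => e (- u) ** (e (- u^-1) ** e (- u))).
Hypothesis HC1 : forall u v, u \is a GRing.unit -> v \is a GRing.unit -> HC u ** HC v = HC (u * v).
Hypothesis HC2 : forall a b, e a ** (e 0 ** e b) = HC (-1) ** e (a + b).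
Hypothesis HC3 : forall u a, u \is a GRing.unit -> HC u ** (e a ** HC u) = e (u ^+ 2 * a).
Hypothesis Hgen : forall P : G -> Prop, (forall t, P (e t)) -> P g1 ->
  (forall a b, P a -> P b -> P (a ** b)) -> (forall a, P a -> P (gi a)) -> forall g, P g.

Local Notation z := (HC (-1)).
Lemma c_H1 : HC 1 = g1.
Proof. by apply: g_idem; rewrite HC1 ?unitr1 // mulr1. Qed.
Lemma c_z2 : z ** z = g1.
Proof. by rewrite HC1 ?unitrN1 // mulrNN mulr1 c_H1. Qed.
Lemma c_zinv : gi z = z.
Proof. exact: ginv_uniq c_z2. Qed.
Lemma c_zc : central z.
Proof.
have h a : z ** e a = e a ** z.
  have h0 := HC3 a (unitrN1 A); rewrite sq_m1 mul1r in h0.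
  by rewrite -{1}h0 gmA c_z2 g1m.
move=> g; elim/Hgen: g => //.
- by rewrite g1m gm1.
- by move=> a b ha hb; rewrite gmA ha -gmA hb gmA.
- move=> a ha; apply: (@gmIl _ a); rewrite gmA -ha -gmA gmV gm1.
  by rewrite gmA gmV g1m.
Qed.
Lemma c_e0 : e 0 ** e 0 = z.
Proof.
apply: (@gmIr _ (e 0)); rewrite -gmA HC2 addr0; done.
Qed.
Lemma c_ie0 : gi (e 0) = z ** e 0.
Proof. by apply: ginv_uniq; rewrite (cmv _ _ c_zc) c_e0 c_z2. Qed.
Lemma c_6 t : e 0 ** (e (- t) ** e 0) = gi (e t).
Proof.
apply/esym/ginv_uniq; rewrite gmA gmA -(gmA (e t)) HC2 subrr.
by rewrite -gmA c_e0 c_z2.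
Qed.
Lemma HCinv u : u \is a GRing.unit -> gi (HC u) = HC u^-1.
Proof. by move=> hu; apply: ginv_uniq; rewrite HC1 ?unitrV // mulrV // c_H1. Qed.
Lemma HCneg u : u \is a GRing.unit -> HC (- u) = HC u ** z.
Proof. by move=> hu; rewrite HC1 ?unitrN1 // mulrN1. Qed.
Lemma c_conjinv u t : u \is a GRing.unit -> HC u ** (gi (e t) ** HC u) = gi (e (u ^- 2 * t)).
Proof.
move=> hu; have hu' : u^-1 \is a GRing.unit by rewrite unitrV.
rewrite -exprVn -(HC3 t hu') !giM -gmA (HCinv hu') invrK.
by [].
Qed.
Lemma c_7 s : gi (e 0) ** e (- s) = gi (e s) ** e 0.
Proof.
by rewrite -(c_6 s) c_ie0 -!gmA c_e0 c_zc -gmA.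
Qed.
Lemma c_8 s : e 0 ** gi (e (- s)) = e s ** gi (e 0).
Proof.
by rewrite -(c_6 (- s)) opprK c_ie0 gmA c_e0 (cmv _ _ c_zc).
Qed.

Definition xC t := e (- t) ** gi (e 0).
Definition yC t := gi (e 0) ** e t.
Definition xsC ij t := if ij then xC t else yC t.
Definition wC ij u := xsC ij u ** (xsC (~~ ij) (- u^-1) ** xsC ij u).

Lemma SC1 ij s t : xsC ij s ** xsC ij t = xsC ij (s + t).
Proof.
case: ij; rewrite /= /xC /yC.
- rewrite -gmA (gmA (gi (e 0))) c_7 gmK.
  apply: (@gmIr _ (e t)); rewrite gmKV c_ie0 -!gmA (cmv _ _ c_zc) HC2.
  by rewrite gmA c_z2 g1m opprD addrNK.
- rewrite !c_ie0 -!gmA [e s ** (z ** _)](cmv _ _ c_zc) [e 0 ** (z ** _)](cmv _ _ c_zc).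
  by rewrite HC2 (gmA z z) c_z2 g1m (cmv _ _ c_zc).
Qed.

Lemma WCt u : wC true u = HC u ** e 0.
Proof.
rewrite /wC /= /xC /yC /HC unlock -!gmA [gi (e 0) ** (gi (e 0) ** _)]gmA -giM c_e0 c_zinv.
rewrite (cmv _ _ c_zc) c_ie0 [e (- u) ** (z ** e 0)](cmv _ _ c_zc).
rewrite [e (- u^-1) ** (z ** _)](cmv _ _ c_zc) [e (- u) ** (z ** _)](cmv _ _ c_zc).
by rewrite gmA c_z2 g1m.
Qed.
Lemma WCf u : wC false u = e 0 ** HC (- u).
Proof.
rewrite /wC /= /xC /yC /HC unlock -!gmA [gi (e 0) ** (gi (e 0) ** _)]gmA -giM c_e0 c_zinv.
rewrite [e (- - u^-1) ** (z ** _)](cmv _ _ c_zc) [e u ** (z ** _)](cmv _ _ c_zc).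
rewrite c_ie0 -gmA [e 0 ** (z ** _)](cmv _ _ c_zc) gmA c_z2 g1m.
by rewrite invrN !opprK.
Qed.

Lemma SC2 ij u t : u \is a GRing.unit ->
  wC ij u ** (xsC ij t ** wC ij (- u)) = xsC (~~ ij) (- (u ^- 2) * t).
Proof.
move=> hu; case: ij => /=.
- rewrite !WCt HCneg // /xC /yC mulNr c_7 c_ie0 -!gmA.
  rewrite [HC u ** (z ** _)](cmv _ _ c_zc) [e 0 ** (z ** _)](cmv _ _ c_zc).
  rewrite [z ** (z ** _)]gmA c_z2 g1m.
  rewrite [e (- t) ** (e 0 ** _)]gmA [e 0 ** (e (- t) ** e 0 ** _)]gmA c_6.
  by rewrite (gmA (gi (e t))) (gmA (HC u)) c_conjinv.
- rewrite !WCf opprK HCneg // /xC /yC c_ie0 -!gmA.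
  rewrite [z ** (z ** _)]gmA c_z2 g1m.
  have c_6' s : e 0 ** (e s ** e 0) = gi (e (- s)) by rewrite -c_6 opprK.
  rewrite [e t ** (e 0 ** _)]gmA [e 0 ** (e t ** e 0 ** _)]gmA c_6'.
  rewrite c_conjinv // mulrN c_8 c_ie0.
  by rewrite mulNr opprK.
Qed.

Lemma DG a : wC false (-1) ** yC a = e a.
Proof. by rewrite WCf opprK c_H1 gm1 /yC gKVm. Qed.
Lemma hCE u : wC true u ** wC true (-1) = HC u.
Proof.
rewrite !WCt -!gmA (gmA (e 0)) -(c_zc (e 0)) -gmA c_e0 c_z2 gm1; done.
Qed.
Lemma Dc u v : u \is a GRing.unit -> v \is a GRing.unit ->
  wC true u ** wC true (-1) ** (wC true v ** wC true (-1) **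
    gi (wC true (u * v) ** wC true (-1))) = g1.
Proof. by move=> hu hv; rewrite !hCE gmA HC1 // gmV. Qed.
End CGroup.


Section Mx.
Variable A : comUnitRingType.
Implicit Types a b c d : A.

Lemma mx2M a b c d a' b' c' d' :
  mx2 a b c d *m mx2 a' b' c' d' =
  mx2 (a * a' + b * c') (a * b' + b * d') (c * a' + d * c') (c * b' + d * d').
Proof.
apply/matrixP => i j; rewrite !mxE !big_ord_recr big_ord0 /= !mxE /= add0r.
by case: i => [[|[|i]] Hi] //; case: j => [[|[|j]] Hj].
Qed.
Lemma mx2_1 : (1%:M : 'M[A]_2) = mx2 1 0 0 1.
Proof.
apply/matrixP => i j; rewrite !mxE.
by case: i => [[|[|i]] Hi] //; case: j => [[|[|j]] Hj].
Qed.
Lemma invmx_eq (M N : 'M[A]_2) : M *m N = 1%:M -> invmx M = N.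
Proof.
move=> h; have [uM _] := mulmx1_unit h.
by rewrite -[invmx M]mulmx1 -h mulmxA mulVmx // mul1mx.
Qed.
Lemma invmxM2 (M N : 'M[A]_2) : M \in unitmx -> N \in unitmx ->
  invmx (M *m N) = invmx N *m invmx M.
Proof.
move=> uM uN; apply: invmx_eq.
by rewrite mulmxA -(mulmxA M) mulmxV // mulmx1 mulmxV.
Qed.
Lemma unit_of (M N : 'M[A]_2) : M *m N = 1%:M -> M \in unitmx.
Proof. by move=> h; have [] := mulmx1_unit h. Qed.

Lemma x_mx_inv (p : bool * A) : x_mx p *m x_mx (p.1, - p.2) = 1%:M.
Proof.
case: p => [[] t]; rewrite /x_mx /= mx2M mx2_1; congr mx2; ring.
Qed.
Lemma x_mx_unit (p : bool * A) : x_mx p \in unitmx.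
Proof. exact: unit_of (x_mx_inv p). Qed.
Lemma eps_mx_inv a : eps_mx a *m mx2 0 (-1) 1 a = 1%:M.
Proof. by rewrite /eps_mx mx2M mx2_1; congr mx2; ring. Qed.
Lemma eps_mx_unit a : eps_mx a \in unitmx.
Proof. exact: unit_of (eps_mx_inv a). Qed.

Section Ev.
Variables (X : Type) (f : X -> 'M[A]_2).
Hypothesis fu : forall x, f x \in unitmx.
Lemma mx_eval_cat u v : mx_eval f (u ++ v) = mx_eval f u *m mx_eval f v.
Proof. by elim: u => [|p u IH] /=; rewrite ?mul1mx // IH mulmxA. Qed.
Lemma mx_eval_unit w : mx_eval f w \in unitmx.
Proof.
elim: w => [|[x b] w IH] /=; first exact: unitmx1.
by rewrite unitmx_mul IH andbT; case: b => //=; rewrite unitmx_inv.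
Qed.
Lemma mx_eval_inv w : mx_eval f (inv_word w) = invmx (mx_eval f w).
Proof.
elim: w => [|[x b] w IH] /=; first by rewrite invmx1.
rewrite inv_word_cons mx_eval_cat IH invmxM2 ?mx_eval_unit //; last first.
  by case: b => //=; rewrite unitmx_inv.
by rewrite /= mulmx1; case: b => //=; rewrite invmxK.
Qed.
End Ev.

Lemma mx_eval_ext X (f f' : X -> 'M[A]_2) w :
  (forall x, f x = f' x) -> mx_eval f w = mx_eval f' w.
Proof. by move=> h; elim: w => [|[x b] w IH] //=; rewrite IH h. Qed.

Lemma mx_eval_mapw X Y (f : Y -> 'M[A]_2) (g : X -> word Y) w :
  (forall y, f y \in unitmx) ->
  mx_eval f (mapw g w) = mx_eval (fun x => mx_eval f (g x)) w.
Proof.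
move=> fu; elim: w => [|[x b] w IH] //=.
rewrite -cat1s mapw_cat mx_eval_cat // IH /mapw /= cats0.
by case: b => //=; rewrite mx_eval_inv.
Qed.

Lemma phi_gamma_gen a : phi_St (gamma_gen a) = eps_mx a.
Proof.
rewrite /phi_St /gamma_gen /ww /xw /letter /= invrN1 opprK mulmx1 /x_mx /=.
by rewrite !mx2M /eps_mx; congr mx2; ring.
Qed.
Lemma invmx_eps0 : invmx (eps_mx 0) = mx2 0 (-1) 1 (0 : A).
Proof. exact: invmx_eq (eps_mx_inv 0). Qed.
End Mx.


Lemma cls_mapw X Y (R : word Y -> word Y -> Prop) (g : X -> word Y) w :
  (cls R (mapw g w) : QG R) = ev (fun x => (cls R (g x) : QG R)) w.
Proof.
rewrite cls_ev ev_mapw; apply: ev_ext => x; by rewrite -cls_ev.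
Qed.

Lemma ev_gen X (R : word X -> word X -> Prop) (P : QG R -> Prop) :
  (forall x, P (cls R (letter x))) -> P g1 ->
  (forall a b, P a -> P b -> P (a ** b)) -> (forall a, P a -> P (gi a)) -> forall g, P g.
Proof.
move=> hx h1 hm hi g; rewrite -(cls_rep g) cls_ev.
elim: (rep g) => [|[x b] w IH] //=; apply: hm => //; rewrite /lv /=.
by case: b => //=; apply: hi.
Qed.

Lemma ev_letter X (G : grp) (f : X -> G) x : ev f (letter x) = f x.
Proof. by rewrite /= /lv /= gm1. Qed.

Lemma ev_cons X (G : grp) (f : X -> G) p w : ev f (p :: w) = lv f p ** ev f w.
Proof. by []. Qed.
Lemma lv_t X (G : grp) (f : X -> G) x : lv f (x, true) = gi (f x). Proof. by []. Qed.
Lemma lv_f X (G : grp) (f : X -> G) x : lv f (x, false) = f x. Proof. by []. Qed.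

Section Main.
Variable A : comUnitRingType.
Local Notation GS := (QG (@St_rel A)).
Local Notation GC := (QG (@C_rel A)).
Local Notation clsS := (cls (@St_rel A)).
Local Notation clsC := (cls (@C_rel A)).

Definition xsS (ij : bool) (t : A) : GS := clsS (xw ij t).

Lemma HR1S ij s t : xsS ij s ** xsS ij t = xsS ij (s + t).
Proof.
rewrite /xsS -clsM; apply/cls_eqP.
have := @pe_rel _ (@St_rel A) [::] [::] (xw ij s ++ xw ij t) (xw ij (s + t)).
rewrite /= ?cats0; apply; left; by exists ij, s, t.
Qed.
Lemma wgS ij u : wg xsS ij u = clsS (ww ij u).
Proof. by rewrite wgE /xsS /ww -!clsM. Qed.
Lemma HR2S ij u t : u \is a GRing.unit ->
  wg xsS ij u ** (xsS ij t ** wg xsS ij (- u)) = xsS (~~ ij) (- (u ^- 2) * t).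
Proof.
move=> hu; rewrite !wgS /xsS -!clsM; apply/cls_eqP.
have := @pe_rel _ (@St_rel A) [::] [::] (ww ij u ++ xw ij t ++ ww ij (- u))
   (xw (~~ ij) (- (u ^- 2) * t)).
rewrite /= ?cats0; apply; right; by exists ij, u, t.
Qed.
Lemma HgenS (P : GS -> Prop) : (forall ij t, P (xsS ij t)) -> P g1 ->
  (forall a b, P a -> P b -> P (a ** b)) -> (forall a, P a -> P (gi a)) -> forall g, P g.
Proof. move=> hx; apply: ev_gen => -[ij t]; exact: hx. Qed.

Ltac stinst := first [exact: HR1S | exact: HR2S | exact: HgenS].

Definition Eg (a : A) : GS := clsS (gamma_gen a).
Lemma EgE a : Eg a = E xsS a.
Proof. by rewrite EE /Eg /gamma_gen clsM -wgS. Qed.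
Definition Gam (w : word A) : GS := ev Eg w.
Lemma GamE w : clsS (gamma w) = Gam w.
Proof. exact: cls_mapw. Qed.
Lemma Gam_cat u v : Gam (u ++ v) = Gam u ** Gam v.
Proof. exact: ev_cat. Qed.
Lemma Gam_eps a : Gam (epsw a) = E xsS a.
Proof. by rewrite /Gam /epsw ev_letter EgE. Qed.
Lemma Gam_hC u : Gam (hC u) = HH xsS u.
Proof. by rewrite /hC !Gam_cat !Gam_eps HHdef. Qed.

Lemma clsH u : clsS (h12 u) = hh xsS u.
Proof. by rewrite hhE /h12 clsM !wgS. Qed.
Lemma clsCW u v : clsS (cw u v) = cc xsS u v.
Proof. by rewrite /cw (clsM _ (h12 u)) (clsM _ (h12 v)) clsV !clsH ccE. Qed.

Definition C2F (p : (A * A) * bool) : word (bool * A) :=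
  if p.2 then inv_word (cw p.1.1 p.1.2) else cw p.1.1 p.1.2.

Lemma C2_nil : C2_word (A:=A) [::].
Proof. by exists [::]. Qed.
Lemma C2_cat (c c' : word (bool * A)) : C2_word c -> C2_word c' -> C2_word (c ++ c').
Proof.
move=> [s [hs ->]] [s' [hs' ->]]; exists (s ++ s'); split.
  by rewrite all_cat hs hs'.
by rewrite map_cat flatten_cat.
Qed.
Lemma C2_inv (c : word (bool * A)) : C2_word c -> C2_word (inv_word c).
Proof.
move=> [s [hs ->]]; exists (rev (map (fun p => (p.1, ~~ p.2)) s)); split.
  rewrite all_rev all_map; apply: sub_all hs => -[[u v] b] //.
elim: s {hs} => [|p s IH] //=.
rewrite inv_word_cat IH rev_cons map_rcons flatten_rcons /=.
by case: p.2 => //=; rewrite inv_wordK.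
Qed.

Lemma C2_central (c : word (bool * A)) : C2_word c -> central (clsS c : GS).
Proof.
move=> [s [hs ->]]; elim: s hs => [|[[u v] b] s IH] /=.
  by move=> _ x; rewrite cls0 g1m gm1.
move=> /andP[/andP[hu hv] hs]; rewrite clsM; apply: central_mul; last exact: IH.
have hc : central (cc xsS u v) by apply: cc_central => //; stinst.
by case: b => /=; rewrite ?clsV clsCW //; apply: central_inv.
Qed.

Lemma C2_cw (u v : A) : u \is a GRing.unit -> v \is a GRing.unit -> C2_word (cw u v).
Proof. by move=> hu hv; exists [:: ((u, v), false)]; rewrite /= hu hv ?cats0. Qed.

Lemma rel_wd l r : C_rel l r ->
  exists c, C2_word c /\ Gam l = Gam r ** clsS c.
Proof.
have hm1 : (-1 : A) \is a GRing.unit by apply: unitrN1.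
case=> [[u [v [hu [hv [-> ->]]]]] | [[a [b [-> ->]]] | [u [a [hu [-> ->]]]]]].
- exists (inv_word (cw (-1) (-1)) ++ cw u v); split.
    by apply: C2_cat; [apply: C2_inv; apply: C2_cw | apply: C2_cw].
  rewrite Gam_cat !Gam_hC clsM clsV !clsCW.
  by apply: G3 => //; stinst.
- exists [::]; split; first exact: C2_nil.
  rewrite cls0 gm1 (Gam_cat (epsw a)) (Gam_cat (epsw 0)) (Gam_cat (hC (-1))) Gam_hC !Gam_eps.
  by apply: G1; stinst.
- exists (cw u u^-1 ++ (inv_word (cw (-1) (-1)) ++ inv_word (cw (-1) (-1)))); split.
    apply: C2_cat; first by apply: C2_cw; rewrite ?unitrV.
    by apply: C2_cat; apply: C2_inv; apply: C2_cw.
  rewrite (Gam_cat (hC u)) (Gam_cat (epsw a)) !Gam_hC !Gam_eps (clsM _ (cw u u^-1)) (clsM _ (inv_word (cw (-1) (-1)))) !clsV !clsCW.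
  by apply: G4 => //; stinst.
Qed.

Lemma wd (w w' : word A) : C_eqv w w' ->
  exists c, C2_word c /\ Gam w = Gam w' ** clsS c.
Proof.
elim=> {w w'}.
- by move=> w; exists [::]; split; [exact: C2_nil | rewrite cls0 gm1].
- move=> w w' _ [c [hc e]]; exists (inv_word c); split; first exact: C2_inv.
  by rewrite e clsV gmK.
- move=> w1 w2 w3 _ [c1 [hc1 e1]] _ [c2 [hc2 e2]].
  exists (c2 ++ c1); split; first exact: C2_cat.
  by rewrite e1 e2 clsM gmA.
- move=> p q x b; exists [::]; split; first exact: C2_nil.
  rewrite cls0 gm1 /Gam !ev_cat !ev_cons.
  by case: b; rewrite ?lv_t ?lv_f ?gKm ?gKVm.
- move=> p q l r hlr; have [c [hc e]] := rel_wd hlr.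
  exists c; split => //.
  rewrite !Gam_cat e -!gmA; congr (_ ** _).
  by rewrite -C2_central // gmA.
Qed.

Definition eC (a : A) : GC := clsC (epsw a).
Lemma clsHC u : clsC (hC u) = HC eC u.
Proof. by rewrite /HC unlock /hC !clsM. Qed.
Lemma HC1C u v : u \is a GRing.unit -> v \is a GRing.unit -> HC eC u ** HC eC v = HC eC (u * v).
Proof.
move=> hu hv; rewrite -!clsHC -clsM; apply/cls_eqP.
have := @pe_rel _ (@C_rel A) [::] [::] (hC u ++ hC v) (hC (u * v)).
rewrite /= ?cats0; apply; left; by exists u, v.
Qed.
Lemma HC2C a b : eC a ** (eC 0 ** eC b) = HC eC (-1) ** eC (a + b).
Proof.
rewrite -!clsHC /eC -!clsM; apply/cls_eqP.
have := @pe_rel _ (@C_rel A) [::] [::] (epsw a ++ epsw 0 ++ epsw b) (hC (-1) ++ epsw (a + b)).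
rewrite /= ?cats0; apply; right; left; by exists a, b.
Qed.
Lemma HC3C u a : u \is a GRing.unit -> HC eC u ** (eC a ** HC eC u) = eC (u ^+ 2 * a).
Proof.
move=> hu; rewrite -!clsHC /eC -!clsM; apply/cls_eqP.
have := @pe_rel _ (@C_rel A) [::] [::] (hC u ++ epsw a ++ hC u) (epsw (u ^+ 2 * a)).
rewrite /= ?cats0; apply; right; right; by exists u, a.
Qed.
Lemma HgenC (P : GC -> Prop) : (forall t, P (eC t)) -> P g1 ->
  (forall a b, P a -> P b -> P (a ** b)) -> (forall a, P a -> P (gi a)) -> forall g, P g.
Proof. move=> hx; apply: ev_gen => t; exact: hx. Qed.

Ltac cinst := first [exact: HC1C | exact: HC2C | exact: HC3C | exact: HgenC].

Definition fD (p : bool * A) : GC := xsC eC p.1 p.2.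
Lemma ev_ww ij u : ev fD (ww ij u) = wC eC ij u.
Proof. by rewrite /ww !ev_cat !ev_letter. Qed.
Lemma St_resp l r : St_rel l r -> ev fD l = ev fD r.
Proof.
case=> [[ij [s [t [-> ->]]]] | [ij [u [t [hu [-> ->]]]]]].
  by rewrite ev_cat !ev_letter /fD; apply: SC1; cinst.
rewrite (ev_cat _ (ww ij u)) (ev_cat _ (xw ij t)) !ev_ww ev_letter /fD.
rewrite ev_letter; by apply: SC2 => //; cinst.
Qed.
Lemma Dgam w : ev fD (gamma w) = clsC w.
Proof.
rewrite ev_mapw cls_ev; apply: ev_ext => a.
rewrite /gamma_gen ev_cat ev_ww ev_letter /fD.
by apply: DG; cinst.
Qed.
Lemma Dcw u v : u \is a GRing.unit -> v \is a GRing.unit -> ev fD (cw u v) = g1.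
Proof.
move=> hu hv; rewrite /cw (ev_cat _ (h12 u)) (ev_cat _ (h12 v)) ev_inv /h12 (ev_cat _ (ww true u)) (ev_cat _ (ww true v)) (ev_cat _ (ww true (u * v))) !ev_ww.
by apply: Dc => //; cinst.
Qed.
Lemma DC2 c : C2_word c -> ev fD c = g1.
Proof.
move=> [s [hs ->]]; elim: s hs => [|[[u v] b] s IH] //=.
move=> /andP[/andP[hu hv] hs]; rewrite ev_cat IH // gm1.
by case: b; rewrite ?ev_inv (Dcw hu hv) ?gi1.
Qed.

Lemma inj (w w' : word A) : StC_eqv (gamma w) (gamma w') -> C_eqv w w'.
Proof.
move=> [c [hc h]]; apply/(cls_eqP (@C_rel A)).
have := ev_resp St_resp h; rewrite (ev_cat _ (gamma w')) (DC2 hc) gm1 !Dgam.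
done.
Qed.

Definition dgen (p : bool * A) : word A :=
  if p.1 then epsw (- p.2) ++ inv_word (epsw 0) else inv_word (epsw 0) ++ epsw p.2.

Lemma dgen_t t : dgen (true, t) = epsw (- t) ++ inv_word (epsw 0). Proof. by []. Qed.
Lemma dgen_f t : dgen (false, t) = inv_word (epsw 0) ++ epsw t. Proof. by []. Qed.
Lemma surj v : clsS (gamma (mapw dgen v)) = clsS v.
Proof.
rewrite GamE /Gam ev_mapw [RHS]cls_ev; apply: (@ev_ext _ GS) => -[] [] t;
  rewrite ?dgen_t ?dgen_f ev_cat ev_inv /epsw !ev_letter !EgE.
  by apply: surj_x; stinst.
by apply: surj_y; stinst.
Qed.

Lemma C2U_dgen (p : bool * A) : C_to_SL2 (dgen p) = x_mx p.
Proof.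
have hu := @eps_mx_unit A.
case: p => [[] t]; rewrite ?dgen_t ?dgen_f /C_to_SL2 mx_eval_cat // mx_eval_inv //;
   rewrite /epsw /letter /= !mulmx1 invmx_eps0 /eps_mx /x_mx /= mx2M; congr mx2; ring.
Qed.
End Main.

Theorem theoremA14 (A : comUnitRingType) :
  (* gamma is well defined on C(A) -> St(2,A)/C(2,A) *)
  (forall w w' : word A, C_eqv w w' -> StC_eqv (gamma w) (gamma w')) /\
  (* gamma is injective *)
  (forall w w' : word A, StC_eqv (gamma w) (gamma w') -> C_eqv w w') /\
  (* gamma is surjective *)
  (forall v : word (bool * A), exists w : word A, StC_eqv (gamma w) v) /\
  (* gamma maps U(A) into K_2(2,A)/C(2,A) *)
  (forall w : word A, in_U w ->
     exists v : word (bool * A), in_K2 v /\ StC_eqv (gamma w) v) /\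
  (* and onto K_2(2,A)/C(2,A) *)
  (forall v : word (bool * A), in_K2 v ->
     exists w : word A, in_U w /\ StC_eqv (gamma w) v).
Proof.
split.
  move=> w w' h; have [c [hc e]] := wd h; exists c; split => //.
  by apply/(cls_eqP (@St_rel A)); rewrite clsM !GamE.
split; first exact: inj.
have hsurj (v : word (bool * A)) : StC_eqv (gamma (mapw (@dgen A) v)) v.
  exists [::]; split; first exact: C2_nil.
  by apply/(cls_eqP (@St_rel A)); rewrite cats0 surj.
split; first by move=> v; exists (mapw (@dgen A) v).
split.
  move=> w hw; exists (gamma w); split.
    rewrite /in_K2 /phi_St /gamma -/(mapw _ w) mx_eval_mapw; last exact: x_mx_unit.
    rewrite -hw /in_U /C_to_SL2; apply: mx_eval_ext => a.
    exact: phi_gamma_gen.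
  exists [::]; split; first exact: C2_nil.
  rewrite cats0; exact: pe_refl.
move=> v hv; exists (mapw (@dgen A) v); split => //.
rewrite /in_U /C_to_SL2 mx_eval_mapw; last exact: eps_mx_unit.
rewrite -hv /in_K2 /phi_St; apply: mx_eval_ext => p.
exact: C2U_dgen.
Qed.
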